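(* Let $\mathcal{H}$ be a Hilbert space of finite dimension $d\ge2$, let $\mathcal{F}(\mathcal{H})\subseteq\mathcal{D}(\mathcal{H})$ be a closed set of free states (not assumed convex), and let $\rho\in\mathcal{D}(\mathcal{H})\setminus\mathcal{F}(\mathcal{H})$. Then there exists a family of channel ensembles $\big(\{p_i,\Lambda_i^{(m)}\}_i\big)_{m=2}^d$ such that \[\max_{\sigma\in\mathcal{F}(\mathcal{H})}\ \min_{m=2,\dots,d}\ \frac{\min_{\{M_i\}_i}p_{\mathrm{err}}(\{p_i,\Lambda_i^{(m)}\}_i,\{M_i\}_i,\rho^{\otimes m})}{\min_{\{M_i\}_i}p_{\mathrm{err}}(\{p_i,\Lambda_i^{(m)}\}_i,\{M_i\}_i,\sigma^{\otimes m})}<1.\]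
   Context: $\mathcal{D}(\mathcal{H})$ is the set of density operators on $\mathcal{H}$. A channel ensemble $\{p_i,\Lambda_i^{(m)}\}_i$ is a finite probability distribution $(p_i)_i$ with quantum channels $\Lambda_i^{(m)}$ from operators on $\mathcal{H}^{\otimes m}$ to operators on a common finite-dimensional output space. For a POVM $\{M_i\}_i$ on the output space (same index set) and a state $\omega$ on $\mathcal{H}^{\otimes m}$, the error probability of channel exclusion is $p_{\mathrm{err}}(\{p_i,\Lambda_i^{(m)}\}_i,\{M_i\}_i,\omega)=\sum_ip_i\operatorname{tr}[M_i\Lambda_i^{(m)}(\omega)]$; the minima are over all such POVMs. *)

(* Defs.v *)
From HB Require Import structures.
From mathcomp Require Import all_boot all_order all_algebra.
From mathcomp Require Import complex mxtens.
From mathcomp Require Import boolp classical_sets reals.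

Set Implicit Arguments.
Unset Strict Implicit.
Unset Printing Implicit Defensive.

Import Order.TTheory GRing.Theory Num.Theory.
Local Open Scope ring_scope.
Local Open Scope classical_set_scope.

Section QDefs.
Variable R : realType.
Local Notation C := (R[i]).

Definition adjmx m n (A : 'M[C]_(m, n)) : 'M[C]_(n, m) :=
  \matrix_(i, j) conjc (A j i).

Definition psdmx n (A : 'M[C]_n) : Prop :=
  forall v : 'cV[C]_n, 0 <= (adjmx v *m A *m v) 0 0.

Definition density n (A : 'M[C]_n) : Prop := psdmx A /\ \tr A = 1.

Definition tpow n (A : 'M[C]_n) (m : nat) : 'M[C]_(n ^ m) := ntensmx A m.

(* block (i,j) of X : 'M_(r*n), i.e. X = \sum_{i,j} E_ij (x) blk X i j *)
Definition blk r n (X : 'M[C]_(r * n)) (i j : 'I_r) : 'M[C]_n :=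
  \matrix_(a, b) X (mxtens_index (i, a)) (mxtens_index (j, b)).

(* (id_r (x) L) (X) *)
Definition id_tens r n k (L : 'M[C]_n -> 'M[C]_k) (X : 'M[C]_(r * n)) : 'M[C]_(r * k) :=
  \sum_(i < r) \sum_(j < r) (delta_mx i j *t L (blk X i j)).

Definition channel n k (L : {linear 'M[C]_n -> 'M[C]_k}) : Prop :=
  (forall r (X : 'M[C]_(r * n)), psdmx X -> psdmx (@id_tens r n k L X)) /\
  (forall X : 'M[C]_n, \tr (L X) = \tr X).

Definition prob_dist N (p : 'I_N -> R) : Prop :=
  (forall i, 0 <= p i) /\ \sum_(i < N) p i = 1.

Definition povm N k (M : 'I_N -> 'M[C]_k) : Prop :=
  (forall i, psdmx (M i)) /\ \sum_(i < N) M i = 1%:M.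

Definition channel_ensemble N n k (p : 'I_N -> R) (L : 'I_N -> {linear 'M[C]_n -> 'M[C]_k}) : Prop :=
  prob_dist p /\ forall i, channel (L i).

Definition perr N n k (p : 'I_N -> R) (L : 'I_N -> {linear 'M[C]_n -> 'M[C]_k})
  (M : 'I_N -> 'M[C]_k) (w : 'M[C]_n) : R :=
  complex.Re (\sum_(i < N) (p i)%:C%C * \tr (M i *m L i w)).

(* min over POVMs (taken as the infimum over all POVMs) *)
Definition perr_min N n k (p : 'I_N -> R) (L : 'I_N -> {linear 'M[C]_n -> 'M[C]_k})
  (w : 'M[C]_n) : R :=
  inf [set perr p L M w | M in [set M : 'I_N -> 'M[C]_k | povm M]].

(* closedness of a set of matrices (entrywise/norm topology on C^{n x n}),
   sequential form *)
Definition closed_mxset n (F : set 'M[C]_n) : Prop :=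
  forall (s : nat -> 'M[C]_n) (A : 'M[C]_n),
    (forall t, F (s t)) ->
    (forall i j (e : R), 0 < e -> exists T, forall t, (T <= t)%N ->
        `|s t i j - A i j| < (e%:C)%C) ->
    F A.

End QDefs.

(* Main.v *)
Require Import Defs.
From HB Require Import structures.
From mathcomp Require Import all_boot all_order all_algebra.
From mathcomp Require Import complex mxtens.
From mathcomp Require Import boolp classical_sets reals.
From mathcomp Require Import ring lra zify.
Import Order.TTheory GRing.Theory Num.Theory.
Local Open Scope ring_scope.
Set Implicit Arguments.
Unset Strict Implicit.
Unset Printing Implicit Defensive.

Section S.
Variable R : realType.
Local Notation C := (R[i]).

Lemma adjmxM m n p (A : 'M[C]_(m,n)) (B : 'M[C]_(n,p)) :
  adjmx (A *m B) = adjmx B *m adjmx A.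
Proof.
apply/matrixP=> i j; rewrite !mxE rmorph_sum; apply: eq_bigr => k _.
by rewrite !mxE rmorphM mulrC.
Qed.

Lemma adjmxK m n (A : 'M[C]_(m,n)) : adjmx (adjmx A) = A.
Proof. by apply/matrixP=> i j; rewrite !mxE conjcK. Qed.

Definition quad n (x : 'cV[C]_n) (Y : 'M[C]_n) (y : 'cV[C]_n) : C :=
  (adjmx x *m Y *m y) 0 0.

Lemma quadE n (x : 'cV[C]_n) Y y :
  quad x Y y = \sum_p \sum_q conjc (x p 0) * Y p q * y q 0.
Proof.
rewrite /quad mxE; under eq_bigr do rewrite mxE mulr_suml.
rewrite exchange_big; apply: eq_bigr => p _; apply: eq_bigr => q _.
by rewrite !mxE.
Qed.

Lemma sum_tens r n (F : 'I_(r * n) -> C) :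
  \sum_p F p = \sum_i \sum_a F (mxtens_index (i, a)).
Proof.
rewrite pair_big /=.
rewrite (reindex (@mxtens_index r n)) /=; last first.
  by exists (@mxtens_unindex r n) => x _; [rewrite mxtens_indexK|rewrite mxtens_unindexK].
by apply: eq_bigr => -[i a].
Qed.

Definition slice r n (v : 'cV[C]_(r * n)) (i : 'I_r) : 'cV[C]_n :=
  \col_a v (mxtens_index (i, a)) 0.

Lemma quad_blk r n (x : 'cV[C]_(r * n)) Y y :
  quad x Y y = \sum_i \sum_j quad (slice x i) (blk Y i j) (slice y j).
Proof.
rewrite quadE sum_tens.
under eq_bigr do under eq_bigr do rewrite sum_tens.
apply: eq_bigr => i _.
rewrite exchange_big /=; apply: eq_bigr => j _.
rewrite quadE; apply: eq_bigr => a _; apply: eq_bigr => b _.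
by rewrite !mxE.
Qed.

Lemma blk_id_tens r n k (L : 'M[C]_n -> 'M[C]_k) (X : 'M[C]_(r * n)) i j :
  blk (id_tens L X) i j = L (blk X i j).
Proof.
apply/matrixP => a b; rewrite /id_tens {1}/blk mxE.
rewrite (summxE (index_enum _)).
under eq_bigr do rewrite (summxE (index_enum _)).
under eq_bigr do under eq_bigr do rewrite tensmxE mxE.
rewrite pair_bigA (bigD1 (i,j)) //= big1 ?addr0 ?eqxx ?mul1r //.
move=> [i' j'] /=; rewrite xpair_eqE negb_and => H.
case: (i =P i') H => [<-|_ _]; last by rewrite mul0r.
by rewrite eqxx /= => H; rewrite eq_sym (negbTE H) mul0r.
Qed.


Lemma quad_kraus m n (S : finType) (a : S -> C) (K : S -> 'M[C]_(m, n)) x Y y :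
  quad x (\sum_s a s *: (K s *m Y *m adjmx (K s))) y =
  \sum_s a s * quad (adjmx (K s) *m x) Y (adjmx (K s) *m y).
Proof.
rewrite /quad mulmx_sumr mulmx_suml (summxE (index_enum _)); apply: eq_bigr => s _.
rewrite -scalemxAr -scalemxAl mxE; congr (_ * _).
by rewrite adjmxM adjmxK !mulmxA.
Qed.

Definition kraus n k (S : finType) (c : S -> R) (K : S -> 'M[C]_(k, n))
  (X : 'M[C]_n) : 'M[C]_k := \sum_s (c s)%:C%C *: (K s *m X *m adjmx (K s)).

Lemma kraus_is_linear n k (S : finType) (c : S -> R) (K : S -> 'M[C]_(k, n)) :
  linear (kraus c K).
Proof.
move=> a X Y; rewrite /kraus scaler_sumr -big_split /=; apply: eq_bigr => s _.
by rewrite mulmxDr mulmxDl scalerDr -scalemxAr -scalemxAl !scalerA mulrC.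
Qed.

Lemma slice_col r n (f : 'I_r -> 'cV[C]_n) i :
  slice (\col_p (f (mxtens_unindex p).1 (mxtens_unindex p).2 0)) i = f i.
Proof. by apply/matrixP => a b; rewrite !mxE mxtens_indexK ord1. Qed.

Lemma kraus_cp n k (S : finType) (c : S -> R) (K : S -> 'M[C]_(k, n)) :
  (forall s, 0 <= c s) ->
  forall r (X : 'M[C]_(r * n)), psdmx X -> psdmx (id_tens (kraus c K) X).
Proof.
move=> c0 r X pX v; rewrite -/(quad v _ v) quad_blk.
under eq_bigr do under eq_bigr do rewrite blk_id_tens quad_kraus.
under eq_bigr do rewrite exchange_big.
rewrite exchange_big /=; apply: sumr_ge0 => s _.
under eq_bigr do rewrite -mulr_sumr.
rewrite -mulr_sumr; apply: mulr_ge0; first by rewrite ler0c.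
pose W := \col_p ((adjmx (K s) *m slice v (mxtens_unindex p).1) (mxtens_unindex p).2 0).
have := pX W; rewrite -/(quad W X W) quad_blk.
have eW i : slice W i = adjmx (K s) *m slice v i.
  by apply/matrixP => a b; rewrite !mxE mxtens_indexK ord1.
by under eq_bigr do under eq_bigr do rewrite !eW.
Qed.

Lemma kraus_tp n k (S : finType) (c : S -> R) (K : S -> 'M[C]_(k, n)) :
  \sum_s (c s)%:C%C *: (adjmx (K s) *m K s) = 1%:M ->
  forall X, \tr (kraus c K X) = \tr X.
Proof.
move=> H X; rewrite /kraus raddf_sum /=.
under eq_bigr do rewrite mxtraceZ mxtrace_mulC mulmxA -mxtraceZ scalemxAl.
by rewrite -raddf_sum /= -mulmx_suml H mul1mx.
Qed.

Lemma adj_delta m n (i : 'I_m) (j : 'I_n) : adjmx (delta_mx i j : 'M[C]_(m,n)) = delta_mx j i.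
Proof.
by apply/matrixP => a b; rewrite !mxE andbC rmorph_nat.
Qed.

Lemma kraus_term n k (o : 'I_k) (w : 'cV[C]_n) X :
  let K := delta_mx o 0 *m adjmx w in
  K *m X *m adjmx K = quad w X w *: delta_mx o o.
Proof.
rewrite /= adjmxM adjmxK adj_delta !mulmxA -(mulmxA _ (adjmx w)) -(mulmxA _ _ w).
rewrite [adjmx w *m X *m w]mx11_scalar mul_mx_scalar -scalemxAl mul_delta_mx.
by [].
Qed.

End S.

HB.instance Definition _ (R : realType) n k (S : finType) (c : S -> R)
  (K : S -> 'M[R[i]]_(k, n)) :=
  GRing.isLinear.Build R[i] 'M[R[i]]_n 'M[R[i]]_k *:%R (kraus c K) (kraus_is_linear c K).

Section S2.
Variable R : realType.
Local Notation C := (R[i]).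

Lemma kraus_channel n k (S : finType) (c : S -> R) (K : S -> 'M[C]_(k, n)) :
  (forall s, 0 <= c s) ->
  \sum_s (c s)%:C%C *: (adjmx (K s) *m K s) = 1%:M ->
  channel (kraus c K : {linear _ -> _}).
Proof. by move=> c0 H; split; [exact: kraus_cp | exact: kraus_tp]. Qed.

Lemma inf_attained (E : set R) x : E x -> (forall y, E y -> x <= y) -> inf E = x.
Proof.
move=> Ex lb; apply/le_anti/andP; split.
  by apply: ge_inf => //; exists x.
by apply: lb_le_inf => //; exists x.
Qed.

Lemma quadDl n (x1 x2 : 'cV[C]_n) Y y : quad (x1 + x2) Y y = quad x1 Y y + quad x2 Y y.
Proof.
rewrite /quad.
have -> : adjmx (x1 + x2) = adjmx x1 + adjmx x2 by apply/matrixP=> i j; rewrite !mxE rmorphD.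
by rewrite !mulmxDl mxE.
Qed.
Lemma quadDr n (x y1 y2 : 'cV[C]_n) Y : quad x Y (y1 + y2) = quad x Y y1 + quad x Y y2.
Proof. by rewrite /quad mulmxDr mxE. Qed.
Lemma quadZl n (x : 'cV[C]_n) (z : C) Y y : quad (z *: x) Y y = conjc z * quad x Y y.
Proof.
rewrite /quad.
have -> : adjmx (z *: x) = conjc z *: adjmx x by apply/matrixP=> i j; rewrite !mxE rmorphM.
by rewrite -!scalemxAl mxE.
Qed.
Lemma quadZr n (x y : 'cV[C]_n) (z : C) Y : quad x Y (z *: y) = z * quad x Y y.
Proof. by rewrite /quad -scalemxAr mxE. Qed.
Lemma quad_delta n (a b : 'I_n) (Y : 'M[C]_n) :
  quad (delta_mx a 0) Y (delta_mx b 0) = Y a b.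
Proof.
rewrite quadE pair_bigA (bigD1 (a, b)) //= big1 ?addr0.
  by rewrite !mxE !eqxx andbT rmorph_nat mul1r mulr1.
move=> [p q] /=; rewrite xpair_eqE negb_and !mxE !andbT => /orP[] /negbTE -> .
  by rewrite rmorph0 !mul0r.
by rewrite mulr0.
Qed.
Lemma quadBm n (x : 'cV[C]_n) Y1 Y2 y : quad x (Y1 - Y2) y = quad x Y1 y - quad x Y2 y.
Proof. by rewrite /quad mulmxBr mulmxBl mxE !mxE. Qed.

End S2.

Section S3.
Variable R : realType.
Local Notation C := (R[i]).
Variable d : nat.
Definition Ax := ('I_d * 'I_d * 'I_4)%type.
Definition om (t : 'I_4) : C := ('i%C) ^+ t.
Definition uv (a : Ax) : 'cV[C]_d := delta_mx a.1.1 0 + om a.2 *: delta_mx a.1.2 0.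

Lemma sumA (V : zmodType) (F : Ax -> V) :
  \sum_a F a = \sum_i \sum_j \sum_t F (i, j, t).
Proof.
rewrite pair_bigA /= pair_bigA /=.
by apply: eq_bigr => -[[i j] t].
Qed.

Lemma om_conj t : om t * conjc (om t) = 1.
Proof.
rewrite /om rmorphXn -exprMn.
have -> : ('i%C : C) * conjc 'i%C = 1 by apply/eqP; rewrite eq_complex /= ; simpc.
by rewrite expr1n.
Qed.

Lemma sum_om : \sum_t om t = 0.
Proof.
rewrite !big_ord_recr big_ord0 /= /om.
change (0 + 'i%C^+0 + 'i%C^+1 + 'i%C^+2 + 'i%C^+3 = 0 :> C).
by rewrite !exprS expr0; simpc.
Qed.


Lemma sum_omc : \sum_t conjc (om t) = 0.
Proof. by rewrite -rmorph_sum sum_om rmorph0. Qed.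

Lemma sum_omc2 : \sum_t conjc (om t) ^+ 2 = 0.
Proof.
rewrite !big_ord_recr big_ord0 /= /om.
change (0 + (conjc ('i%C^+0))^+2 + (conjc ('i%C^+1))^+2 + (conjc ('i%C^+2))^+2
  + (conjc ('i%C^+3))^+2 = 0 :> C).
by rewrite !exprS !expr0; simpc.
Qed.

Lemma quad_uv i j t (Y : 'M[C]_d) :
  quad (uv (i, j, t)) Y (uv (i, j, t)) =
  Y i i + om t * Y i j + conjc (om t) * Y j i + Y j j.
Proof.
rewrite /uv /= quadDl !quadDr !quadZl !quadZr !quad_delta.
have hz := om_conj t.
apply/eqP; rewrite -subr_eq0.
set z := om t in hz *; set w := conjc z in hz *.
have -> : Y i i + z * Y i j + (w * Y j i + w * (z * Y j j)) -
   (Y i i + z * Y i j + w * Y j i + Y j j) = (z * w - 1) * Y j j by ring.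
by rewrite hz subrr mul0r.
Qed.

Lemma recover i j (Y : 'M[C]_d) :
  \sum_t conjc (om t) * quad (uv (i, j, t)) Y (uv (i, j, t)) = 4%:R * Y i j.
Proof.
transitivity (\sum_t (conjc (om t) * (Y i i + Y j j) + Y i j + conjc (om t) ^+ 2 * Y j i)).
  apply: eq_bigr => t _; rewrite quad_uv.
  have hz := om_conj t.
  apply/eqP; rewrite -subr_eq0.
  set z := om t in hz *; set w := conjc z in hz *.
  have -> : w * (Y i i + z * Y i j + w * Y j i + Y j j) -
     (w * (Y i i + Y j j) + Y i j + w ^+ 2 * Y j i) = (z * w - 1) * Y i j by ring.
  by rewrite hz subrr mul0r.
rewrite !big_split /= -!mulr_suml sum_omc sum_omc2 !mul0r add0r addr0.
by rewrite sumr_const card_ord mulr_natl.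
Qed.

Lemma adjmxD m n (A B : 'M[C]_(m, n)) : adjmx (A + B) = adjmx A + adjmx B.
Proof. by apply/matrixP=> i j; rewrite !mxE rmorphD. Qed.
Lemma adjmxZ m n (z : C) (A : 'M[C]_(m, n)) : adjmx (z *: A) = conjc z *: adjmx A.
Proof. by apply/matrixP=> i j; rewrite !mxE rmorphM. Qed.

Lemma povm_uv : \sum_a uv a *m adjmx (uv a) = (8 * d)%:R *: 1%:M.
Proof.
rewrite sumA.
have e i j t : uv (i, j, t) *m adjmx (uv (i, j, t)) =
    delta_mx i i + conjc (om t) *: delta_mx i j + om t *: delta_mx j i + delta_mx j j.
  rewrite /uv /= adjmxD adjmxZ !adj_delta mulmxDl !mulmxDr -!scalemxAl -!scalemxAr.
  by rewrite !mul_delta_mx scalerA om_conj scale1r !addrA.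
under eq_bigr do under eq_bigr do under eq_bigr do rewrite e.
under eq_bigr do under eq_bigr do rewrite !big_split /= -!scaler_suml sum_om sum_omc !scale0r !addr0 !sumr_const card_ord.
under eq_bigr do rewrite big_split /= sumr_const card_ord.
rewrite big_split /= sumr_const card_ord !sumrMnl -mx1_sum_delta.
by rewrite scaler_nat -!mulrnA -mulrnDr; congr (_ *+ _); lia.
Qed.
End S3.

Section S4.
Variable R : realType.
Local Notation C := (R[i]).

Lemma quad_tr n (x : 'cV[C]_n) Y : quad x Y x = \tr (Y *m (x *m adjmx x)).
Proof.
rewrite /quad.
have -> : (adjmx x *m Y *m x) 0 0 = \tr (adjmx x *m Y *m x) by rewrite /mxtrace big_ord1.
rewrite -(mulmxA (adjmx x)) mxtrace_mulC; by rewrite mulmxA.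
Qed.

Lemma sum_quad_uv d Y : \sum_a quad (@uv R d a) Y (uv R a) = (8 * d)%:R * \tr Y.
Proof.
under eq_bigr do rewrite quad_tr.
rewrite -raddf_sum -mulmx_sumr povm_uv /= -scalemxAr mulmx1 mxtraceZ. reflexivity.
Qed.

Lemma adjmx_tens m n p q (A : 'M[C]_(m, n)) (B : 'M[C]_(p, q)) :
  adjmx (A *t B) = adjmx A *t adjmx B.
Proof. by apply/matrixP => i j; rewrite !mxE rmorphM. Qed.

Lemma quad_tens m n (x : 'cV[C]_m) (y : 'cV[C]_n) A B :
  quad (x *t y) (A *t B) (x *t y) = quad x A x * quad y B y.
Proof.
rewrite /quad (adjmx_tens x y) (tensmx_mul (adjmx x) (adjmx y) A B) (tensmx_mul (adjmx x *m A) (adjmx y *m B) x y) mxE.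
by rewrite [(mxtens_unindex _).1]ord1 [(mxtens_unindex _).2]ord1.
Qed.

Lemma tens_sum (I J : finType) m n p q (F : I -> 'M[C]_(m, n)) (G : J -> 'M[C]_(p, q)) :
  \sum_a \sum_b (F a *t G b) = (\sum_a F a) *t (\sum_b G b).
Proof.
apply/matrixP => i j.
rewrite (summxE (index_enum _)) mxE (summxE (index_enum _)) (summxE (index_enum _)) mulr_suml.
apply: eq_bigr => a _; rewrite (summxE (index_enum _)) mulr_sumr; apply: eq_bigr => b _.
by rewrite mxE.
Qed.

Lemma tens1 m n : (1%:M : 'M[C]_m) *t (1%:M : 'M[C]_n) = 1%:M.
Proof.
apply/matrixP => i j.
case: (mxtens_indexP i) => i0 a {i}; case: (mxtens_indexP j) => j0 b {j}.
rewrite tensmxE !mxE (inj_eq (can_inj (@mxtens_indexK _ _))) xpair_eqE.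
case: (i0 == j0); case: (a == b); by rewrite ?mul1r ?mul0r.
Qed.

Lemma mxtrace_tens m n (A : 'M[C]_m) (B : 'M[C]_n) : \tr (A *t B) = \tr A * \tr B.
Proof. by rewrite /mxtrace mulr_sum; apply: eq_bigr => p _; rewrite mxE. Qed.

Lemma tr_tpow n (s : 'M[C]_n) m : \tr s = 1 -> \tr (tpow s m) = 1.
Proof.
move=> h; case: m => [|m]; first by rewrite /tpow /= mxtrace1.
rewrite /tpow /ntensmx; elim: m => [|m IH] //=.
by rewrite mxtrace_tens h IH mul1r.
Qed.

End S4.

Section S5.
Variable R : realType.
Local Notation C := (R[i]).

Definition mpK n k (S : finType) (o : S -> 'I_k) (w : S -> 'cV[C]_n) (s : S) : 'M[C]_(k, n) :=
  delta_mx (o s) 0 *m adjmx (w s).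

Lemma mpKK n k (S : finType) (o : S -> 'I_k) (w : S -> 'cV[C]_n) s :
  adjmx (mpK o w s) *m mpK o w s = w s *m adjmx (w s).
Proof.
rewrite /mpK adjmxM adjmxK adj_delta -!mulmxA (mulmxA (delta_mx 0 _)) mul_delta_mx.
have -> : (delta_mx 0 0 : 'M[C]_1) = 1%:M by apply/matrixP => i j; rewrite !ord1 !mxE.
by rewrite mul1mx.
Qed.

Lemma mp_channel n k (S : finType) (c : S -> R) (o : S -> 'I_k) (w : S -> 'cV[C]_n) :
  (forall s, 0 <= c s) ->
  \sum_s (c s)%:C%C *: (w s *m adjmx (w s)) = 1%:M ->
  channel (kraus c (mpK o w) : {linear _ -> _}).
Proof.
move=> c0 H; apply: kraus_channel => //.
by under eq_bigr do rewrite mpKK.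
Qed.

Lemma tr_delta k (M : 'M[C]_k) o : \tr (M *m delta_mx o o) = M o o.
Proof.
rewrite /mxtrace (bigD1 o) //= big1 ?addr0.
  rewrite mxE (bigD1 o) //= big1 ?addr0; first by rewrite mxE !eqxx mulr1.
  by move=> j nj; rewrite mxE (negbTE nj) mulr0.
move=> j nj; rewrite mxE big1 // => l _; rewrite mxE.
by case: (j =P o) nj => [->|_ _]; rewrite ?eqxx //= andbF mulr0.
Qed.

Lemma mp_tr n k (S : finType) (c : S -> R) (o : S -> 'I_k) (w : S -> 'cV[C]_n) M X :
  \tr (M *m kraus c (mpK o w) X) =
  \sum_s (c s)%:C%C * quad (w s) X (w s) * M (o s) (o s).
Proof.
rewrite /kraus mulmx_sumr raddf_sum; apply: eq_bigr => s _.
rewrite /mpK kraus_term -!scalemxAr /= !mxtraceZ tr_delta mulrA.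
by [].
Qed.

End S5.

Section S6.
Variable R : realType.
Local Notation C := (R[i]).

Lemma tensZ m n p q (x y : C) (A : 'M[C]_(m, n)) (B : 'M[C]_(p, q)) :
  (x *: A) *t (y *: B) = (x * y) *: (A *t B).
Proof. by apply/matrixP => i j; rewrite !mxE mulrACA. Qed.

Lemma sum_pair (V : zmodType) (I J : finType) (F : I * J -> V) :
  \sum_p F p = \sum_i \sum_j F (i, j).
Proof. by rewrite pair_bigA; apply: eq_bigr => -[]. Qed.

Lemma natC n : (n%:R : C) = (n%:R : R)%:C%C.
Proof. by rewrite (rmorph_nat (real_complex R) n). Qed.

Variable d : nat.
Hypothesis d0 : (0 < d)%N.
Variable r : Ax d -> R.

Definition S1 := (Ax d * Ax d * 'I_2)%type.
Definition wv (a b : Ax d) : 'cV[C]_(d * d) := uv R a *t uv R b.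
Definition o1 (s : S1) : 'I_2 := s.2.
Definition w1 (s : S1) : 'cV[C]_(d * d) := wv s.1.1 s.1.2.
Definition gam : R := ((8 * d)%:R)^-1.
Definition hh (a b : Ax d) : R := (((a == b)%:R - r a - r b + 2) / 4).
Definition cc (i : 'I_2) (s : S1) : R :=
  gam ^+ 2 * (if i == 0 then (if s.2 == 0 then 1 - hh s.1.1 s.1.2 else hh s.1.1 s.1.2)
              else (s.2 == 1)%:R).

Lemma wvK a b : wv a b *m adjmx (wv a b) = (uv R a *m adjmx (uv R a)) *t (uv R b *m adjmx (uv R b)).
Proof. by rewrite /wv (adjmx_tens (uv R a) (uv R b)) (tensmx_mul (uv R a) (uv R b) (adjmx (uv R a)) (adjmx (uv R b))). Qed.

Lemma gamE : gam * (8 * d)%:R = 1.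
Proof. by rewrite /gam mulVf // pnatr_eq0; lia. Qed.

Lemma sum_cc i a b : \sum_o cc i (a, b, o) = gam ^+ 2.
Proof.
rewrite big_ord_recr big_ord1 /cc /=.
by case: (i == 0) => /=; ring.
Qed.

Lemma cc_TP i : \sum_s (cc i s)%:C%C *: (w1 s *m adjmx (w1 s)) = 1%:M.
Proof.
rewrite sum_pair.
under eq_bigr => ab _.
  rewrite /w1 /= -scaler_suml -rmorph_sum.
  have -> : \sum_o cc i (ab, o) = gam ^+ 2 by case: ab => a b; rewrite sum_cc.
  over.
rewrite -scaler_sumr sum_pair /=.
under eq_bigr do under eq_bigr do rewrite wvK.
rewrite tens_sum povm_uv tensZ tens1 scalerA.
by rewrite natC -!rmorphM /= natrM expr2 mulrACA gamE mulr1 rmorph1 scale1r.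
Qed.


Lemma cc_ge0 (r01 : forall a, 0 <= r a <= 1) i s : 0 <= cc i s.
Proof.
rewrite /cc; apply: mulr_ge0; first by apply: exprn_ge0; rewrite /gam invr_ge0 ler0n.
have hb : forall a b, 0 <= hh a b <= 1.
  move=> a b; rewrite /hh; have /andP[ra1 ra2] := r01 a; have /andP[rb1 rb2] := r01 b.
  case: (a == b) => /=; apply/andP; split; lra.
case: (i == 0); last by case: (s.2 == 1); rewrite ?ler01 ?lexx.
by case: (s.2 == 0); have /andP[h1 h2] := hb s.1.1 s.1.2; lra.
Qed.

Definition Lam (i : 'I_2) : {linear 'M[C]_(d * d) -> 'M[C]_2} := kraus (cc i) (mpK o1 w1).

Lemma Lam_tr i (M : 'M[C]_2) (s : 'M[C]_d) :
  \tr (M *m Lam i (s *t s)) =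
  \sum_x (cc i x)%:C%C * (quad (uv R x.1.1) s (uv R x.1.1) * quad (uv R x.1.2) s (uv R x.1.2)) * M x.2 x.2.
Proof.
rewrite /Lam /= mp_tr; apply: eq_bigr => x _.
by rewrite /w1 /wv /o1 quad_tens.
Qed.

End S6.

Section S7.
Variable R : realType.
Local Notation C := (R[i]).

Lemma ge0_real (z : C) : 0 <= z -> z = (complex.Re z)%:C%C.
Proof. by case: z => a b /ger0_Im /= ->. Qed.

Variable d : nat.
Hypothesis d0 : (0 < d)%N.
Variable r : Ax d -> R.

Lemma sum_S1 (F : S1 d -> R) : \sum_x F x = \sum_a \sum_b \sum_o F (a, b, o).
Proof.
rewrite sum_pair (sum_pair (fun ab => \sum_j F (ab, j))).
by [].
Qed.

Definition KK (i : 'I_2) (a b : Ax d) (o : 'I_2) : R :=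
  if i == 0 then (if o == 0 then 1 - hh r a b else hh r a b) else (o == 1)%:R.

Lemma ccQ i a b o (Pa Pb : R) :
  cc r i (a, b, o) * (((8 * d)%:R * Pa) * ((8 * d)%:R * Pb)) = Pa * Pb * KK i a b o.
Proof.
rewrite /cc /KK /=; set K := (if _ then _ else _).
transitivity ((gam R d * (8 * d)%:R) ^+ 2 * (Pa * Pb * K)); first by ring.
by rewrite gamE // expr1n mul1r.
Qed.

Lemma perr_formula (s : 'M[C]_d) (P : Ax d -> R) (M : 'I_2 -> 'M[C]_2) (al : 'I_2 -> 'I_2 -> R) :
  (forall a, quad (uv R a) s (uv R a) = ((8 * d)%:R * P a)%:C%C) ->
  (forall i o, M i o o = (al i o)%:C%C) ->
  perr (fun _ => 1 / 2) (Lam r) M (s *t s) =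
  1 / 2 * \sum_a \sum_b P a * P b * ((1 - hh r a b) * al 0 0 + hh r a b * al 0 1 + al 1 1).
Proof.
move=> hQ hM.
rewrite /perr big_ord_recr big_ord1 /= !Lam_tr.
have -> : widen_ord (leqnSn 1) ord0 = 0 :> 'I_2 by apply: val_inj.
have -> : ord_max = 1 :> 'I_2 by apply: val_inj.
set RHS := (X in _ = X).
under eq_bigr do rewrite !hQ hM -!rmorphM.
under [in X in _ + X]eq_bigr do rewrite !hQ hM -!rmorphM.
rewrite -!rmorph_sum -!rmorphM -rmorphD /=.
rewrite !sum_S1 -mulrDr -big_split /=; congr (_ * _).
apply: eq_bigr => a _; rewrite -big_split /=; apply: eq_bigr => b _.
rewrite !big_ord_recr !big_ord0 /= !add0r !ccQ /KK /=.
have -> : widen_ord (leqnSn 1) ord_max = 0 :> 'I_2 by apply: val_inj.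
have -> : ord_max = 1 :> 'I_2 by apply: val_inj.
ring.
Qed.

End S7.

Local Open Scope classical_set_scope.

Section S8.
Variable R : realType.
Local Notation C := (R[i]).

Lemma psd_delta k (o : 'I_k) : psdmx (delta_mx o o : 'M[C]_k).
Proof.
move=> v; rewrite -/(quad v _ v) quadE pair_bigA (bigD1 (o, o)) //= big1 ?addr0.
  by rewrite mxE !eqxx mulr1 mulrC; apply: mulcJ_ge0.
move=> [p q] /=; rewrite xpair_eqE negb_and mxE => /orP[] /negbTE ->.
  by rewrite mulr0 mul0r.
by rewrite andbF mulr0 mul0r.
Qed.

Lemma delta2 : delta_mx 1 1 + delta_mx 0 0 = 1%:M :> 'M[C]_2.
Proof.
apply/matrixP => i j; rewrite !mxE.
by case: i => [[|[|i]] Hi] //; case: j => [[|[|j]] Hj] //=; rewrite ?add0r ?addr0.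
Qed.

Lemma povm_diag (M : 'I_2 -> 'M[C]_2) o :
  povm M -> [/\ 0 <= complex.Re (M 0 o o), 0 <= complex.Re (M 1 o o),
    complex.Re (M 0 o o) + complex.Re (M 1 o o) = 1 &
    forall i, M i o o = (complex.Re (M i o o))%:C%C].
Proof.
move=> [psdM sumM].
have g i : 0 <= M i o o by have := psdM i (delta_mx o 0); rewrite -/(quad _ _ _) quad_delta.
have e i : M i o o = (complex.Re (M i o o))%:C%C by apply: ge0_real.
split => //.
- by have := g 0; rewrite [M 0 o o]e ler0c.
- by have := g 1; rewrite [M 1 o o]e ler0c.
have := congr1 (fun A : 'M[C]_2 => complex.Re (A o o)) sumM.
rewrite /= big_ord_recr big_ord1 /= mxE !mxE eqxx /=.
have -> : widen_ord (leqnSn 1) ord0 = 0 :> 'I_2 by apply: val_inj.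
have -> : ord_max = 1 :> 'I_2 by apply: val_inj.
by rewrite raddfD.
Qed.


Lemma Re_ge0 (z : C) : 0 <= z -> 0 <= complex.Re z.
Proof. by rewrite lecE => /andP[]. Qed.

Variable d : nat.
Hypothesis d0 : (0 < d)%N.
Variable r : Ax d -> R.
Hypothesis r01 : forall a, 0 <= r a <= 1.

Definition Pof (s : 'M[C]_d) (a : Ax d) : R :=
  complex.Re (quad (uv R a) s (uv R a)) / (8 * d)%:R.

Lemma N0 : (8 * d)%:R != 0 :> R.
Proof. by rewrite pnatr_eq0; lia. Qed.

Lemma hQ_of s : psdmx s -> forall a, quad (uv R a) s (uv R a) = ((8 * d)%:R * Pof s a)%:C%C.
Proof.
move=> ps a; rewrite /Pof mulrC divfK ?N0 //; apply: ge0_real; exact: ps.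
Qed.

Lemma Pof_ge0 s : psdmx s -> forall a, 0 <= Pof s a.
Proof.
move=> ps a; rewrite /Pof; apply: divr_ge0; last by rewrite ler0n.
by apply: Re_ge0; exact: ps.
Qed.

Lemma Pof_sum s : density s -> \sum_a Pof s a = 1.
Proof.
move=> [ps trs]; rewrite /Pof -mulr_suml -raddf_sum sum_quad_uv trs mulr1 natC /=.
by rewrite mulfV ?N0.
Qed.

Definition HH (s : 'M[C]_d) : R := \sum_a \sum_b Pof s a * Pof s b * hh r a b.

Lemma hh01 a b : 0 <= hh r a b <= 1.
Proof.
rewrite /hh; have /andP[ra1 ra2] := r01 a; have /andP[rb1 rb2] := r01 b.
case: (a == b) => /=; apply/andP; split; lra.
Qed.

Lemma povm_real (M : 'I_2 -> 'M[C]_2) : povm M ->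
  forall i o, M i o o = (complex.Re (M i o o))%:C%C.
Proof. by move=> pM i o; have [_ _ _ ->] := povm_diag o pM. Qed.

Lemma perr_min2 s : density s ->
  perr_min (fun _ => 1 / 2) (Lam r) (s *t s) = 1 / 2 * HH s.
Proof.
move=> ds; have ps := ds.1.
apply: inf_attained.
  pose M0 := fun i : 'I_2 => if i == 0 then delta_mx 1 1 else delta_mx 0 0 : 'M[C]_2.
  have pM0 : povm M0.
    split; first by move=> i; rewrite /M0; case: (i == 0); apply: psd_delta.
    rewrite big_ord_recr big_ord1 /M0 /=.
    exact: delta2.
  exists M0 => //.
  rewrite (perr_formula d0 r (hQ_of ps) (povm_real pM0)) /HH; congr (_ * _).
  apply: eq_bigr => a _; apply: eq_bigr => b _.
  rewrite /M0 /= !mxE /=; ring.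
move=> y [M pM <-].
rewrite (perr_formula d0 r (hQ_of ps) (povm_real pM)) /HH.
apply: ler_wpM2l; first lra.
apply: ler_sum => a _; apply: ler_sum => b _.
apply: ler_wpM2l; first by apply: mulr_ge0; apply: Pof_ge0.
have [a0 _ _ _] := povm_diag 0 pM.
have [_ a1 s1 _] := povm_diag 1 pM.
have /andP[h0 h1] := hh01 a b.
nra.
Qed.

End S8.

Section S9.
Variable R : realType.
Local Notation C := (R[i]).

Lemma normC_real (x : R) : `|(x%:C)%C : C| = (`|x|)%:C%C.
Proof. by rewrite normc_def /= expr0n /= addr0 sqrtr_sqr. Qed.

Lemma norm_om t : `|om R t| = 1.
Proof.
rewrite /om normrX.
have -> : `|'i%C : C| = 1 by rewrite normc_def /= expr0n /= add0r expr1n sqrtr1.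
by rewrite expr1n.
Qed.

Variable d : nat.
Variable F : set 'M[C]_d.
Variable rho : 'M[C]_d.

Lemma sep : closed_mxset F -> ~ F rho ->
  exists e : R, 0 < e /\ forall s, F s -> exists i j, ~ (`|s i j - rho i j| < (e%:C)%C).
Proof.
move=> cF nF; apply: contrapT => H.
have Hn : forall n : nat, exists s, F s /\ forall i j, `|s i j - rho i j| < ((n.+1%:R)^-1%:C)%C.
  move=> n; apply: contrapT => Hn'; apply: H; exists (n.+1%:R)^-1; split.
    by rewrite invr_gt0 ltr0n.
  move=> s Fs; apply: contrapT => K; apply: Hn'; exists s; split => // i j.
  by apply: contrapT => K2; apply: K; exists i, j.
have [f hf] := choice Hn.
apply: nF; apply: (cF f) => [t|i j e e0]; first by case: (hf t).
have e0' : 0 <= e^-1 by rewrite invr_ge0 ltW.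
exists (Num.Def.archi_bound e^-1) => t hT.
apply: (lt_le_trans (proj2 (hf t) i j)).
rewrite lecR -[e]invrK lef_pV2 ?posrE ?invr_gt0 ?ltr0n //.
apply: (le_trans (ltW (archi_boundP e0'))).
by rewrite ler_nat; lia.
Qed.


Lemma IC (d0 : (0 < d)%N) (s : 'M[C]_d) (i j : 'I_d) (e : R) :
  psdmx s -> psdmx rho -> ~ (`|s i j - rho i j| < (e%:C)%C) ->
  exists t, e <= (8 * d)%:R * `|Pof s (i, j, t) - Pof rho (i, j, t)|.
Proof.
move=> ps pr ne.
have key : \sum_t conjc (om R t) * (((8 * d)%:R * (Pof s (i, j, t) - Pof rho (i, j, t)))%:C)%C
    = 4%:R * (s i j - rho i j).
  have -> : s i j - rho i j = (s - rho) i j by rewrite !mxE.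
  rewrite -recover; apply: eq_bigr => t _.
  by rewrite quadBm (hQ_of d0 ps) (hQ_of d0 pr) -rmorphB -mulrBr.
have hn := ler_norm_sum (index_enum 'I_4)
  (fun t => conjc (om R t) * (((8 * d)%:R * (Pof s (i, j, t) - Pof rho (i, j, t)))%:C)%C) xpredT.
rewrite key in hn.
set nD := Num.sqrt (complex.Re (s i j - rho i j) ^+ 2 + complex.Im (s i j - rho i j) ^+ 2).
have hD : `|s i j - rho i j| = (nD%:C)%C by rewrite normc_def.
have eD : e <= nD.
  by rewrite leNgt; apply/negP => h; apply: ne; rewrite hD ltcR.
have hn' : 4%:R * nD <= \sum_t (8 * d)%:R * `|Pof s (i, j, t) - Pof rho (i, j, t)|.
  move: hn; rewrite normrM hD normr_nat natC -rmorphM.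
  under eq_bigr do rewrite normrM norm_conjC norm_om mul1r normC_real normrM normr_nat.
  by rewrite -rmorph_sum lecR.
apply: contrapT => H.
have lt t : (8 * d)%:R * `|Pof s (i, j, t) - Pof rho (i, j, t)| < e.
  by rewrite ltNge; apply/negP => h; apply: H; exists t.
have : \sum_(t < 4) (8 * d)%:R * `|Pof s (i, j, t) - Pof rho (i, j, t)| < \sum_(t < 4) e.
  apply: ltr_sum => //; by apply/hasP; exists ord0; rewrite ?mem_index_enum.
rewrite sumr_const card_ord => h.
have h2 := le_lt_trans hn' h.
have h4 : e *+ 4 = 4%:R * e by rewrite mulr_natl.
rewrite h4 in h2.
have h3 : 4%:R * e <= 4%:R * nD by rewrite ler_pM2l ?ltr0n.
by have := lt_le_trans h2 h3; rewrite ltxx.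
Qed.
End S9.

Section S10.
Variable R : realType.
Local Notation C := (R[i]).

Lemma sum_lin3 (I : finType) (x y z : R) (f g h : I -> R) :
  \sum_a (x * f a + y * g a + z * h a) = x * \sum_a f a + y * \sum_a g a + z * \sum_a h a.
Proof. by rewrite !big_split /= -!mulr_sumr. Qed.

Variable d : nat.
Variable r : Ax d -> R.

Lemma HH_formula (s : 'M[C]_d) : \sum_a Pof s a = 1 ->
  HH r s = (\sum_a ((Pof s a - r a) ^+ 2 - r a ^+ 2) + 2) / 4.
Proof.
move=> hs; set P := Pof s in hs *; set T := \sum_b P b * r b.
have inner a : \sum_b P a * P b * hh r a b =
    1/4 * (P a ^+ 2) + (1/2 - T/4) * P a + (-1/4) * (P a * r a).
  transitivity (\sum_b (P a / 4 * (P b * (a == b)%:R) + (P a / 4 * (2 - r a)) * P b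
                 - P a / 4 * (P b * r b))).
    by apply: eq_bigr => b _; rewrite /hh; ring.
  rewrite sumrB big_split /= -!mulr_sumr -/T hs mulr1.
  have -> : \sum_b P b * (a == b)%:R = P a.
    rewrite (bigD1 a) //= eqxx mulr1 big1 ?addr0 // => b nb.
    by rewrite eq_sym (negbTE nb) mulr0.
  by field.
rewrite /HH -/P.
under eq_bigr => a _ do rewrite inner.
rewrite sum_lin3 hs.
have -> : \sum_a ((P a - r a) ^+ 2 - r a ^+ 2) =
    \sum_a (1 * P a ^+ 2 + 0 * P a + (-2) * (P a * r a)) by apply: eq_bigr => a _; ring.
rewrite sum_lin3 hs -/T; by field.
Qed.

End S10.

Section S11.
Variable R : realType.
Local Notation C := (R[i]).

Definition TRc n : {linear 'M[C]_n -> 'M[C]_2} :=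
  kraus (fun _ : 'I_n => 1) (mpK (fun _ => 1) (fun j => (delta_mx j 0 : 'cV[C]_n))).

Lemma TR_channel n : channel (TRc n).
Proof.
apply: mp_channel => [//|].
under eq_bigr do rewrite adj_delta mul_delta_mx rmorph1 scale1r.
by rewrite -mx1_sum_delta.
Qed.

Definition M0 := fun i : 'I_2 => if i == 0 then delta_mx 1 1 else delta_mx 0 0 : 'M[C]_2.

Lemma povm_M0 : povm M0.
Proof.
split; first by move=> i; rewrite /M0; case: (i == 0); apply: psd_delta.
rewrite big_ord_recr big_ord1 /M0 /=.
exact: delta2.
Qed.

Lemma perr_TR n (M : 'I_2 -> 'M[C]_2) (X : 'M[C]_n) : povm M -> \tr X = 1 ->
  perr (fun _ : 'I_2 => 1 / 2) (fun _ => TRc n) M X = 1 / 2.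
Proof.
move=> pM trX; rewrite /perr.
have e i : \tr (M i *m TRc n X) = M i 1 1.
  rewrite /TRc /= mp_tr.
  under eq_bigr do rewrite quad_delta rmorph1 mul1r.
  by rewrite -mulr_suml -/(mxtrace X) trX mul1r.
rewrite big_ord_recr big_ord1 /= !e.
have [_ _ s1 _] := povm_diag 1 pM.
rewrite (povm_real pM (widen_ord _ _)) (povm_real pM ord_max) -!rmorphM -rmorphD /=.
have -> : widen_ord (leqnSn 1) ord0 = 0 :> 'I_2 by apply: val_inj.
have -> : ord_max = 1 :> 'I_2 by apply: val_inj.
by rewrite -mulrDr s1 mulr1.
Qed.

Lemma perr_min_TR n (X : 'M[C]_n) : \tr X = 1 ->
  perr_min (fun _ : 'I_2 => 1 / 2) (fun _ => TRc n) X = 1 / 2.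
Proof.
move=> trX; apply: inf_attained.
  by exists M0; [exact: povm_M0 | exact: perr_TR povm_M0 trX].
by move=> y [M pM <-]; rewrite perr_TR.
Qed.

End S11.

Lemma le1_of_sum (R : realType) (I : finType) (f : I -> R) a :
  (forall b, 0 <= f b) -> \sum_b f b = 1 -> f a <= 1.
Proof.
move=> f0 hs; rewrite -hs (bigD1 a) //= lerDl; exact: sumr_ge0.
Qed.

Unset Implicit Arguments.
Set Strict Implicit.
Theorem theorem11 (R : realType) (d : nat) (F : set 'M[R[i]]_d) (rho : 'M[R[i]]_d) :
  (2 <= d)%N ->
  F `<=` [set s | density s] ->
  closed_mxset F ->
  density rho -> ~ F rho ->
  exists (N k : nat) (p : 'I_N -> R)
         (L : forall m : nat, 'I_N -> {linear 'M[R[i]]_(d ^ m) -> 'M[R[i]]_k}),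
    (forall m, (2 <= m <= d)%N -> channel_ensemble p (L m)) /\
    (forall sigma, F sigma -> forall m, (2 <= m <= d)%N ->
        0 < perr_min p (L m) (tpow sigma m)) /\
    exists c : R, c < 1 /\
      forall sigma, F sigma -> exists m, (2 <= m <= d)%N /\
        perr_min p (L m) (tpow rho m) / perr_min p (L m) (tpow sigma m) <= c.
Proof.
move=> d2 FD cF drho nF.
have d0 : (0 < d)%N by lia.
set r := Pof rho.
have r0 a : 0 <= r a by apply: (Pof_ge0 drho.1).
have rs : \sum_a r a = 1 by apply: Pof_sum.
have r01 a : 0 <= r a <= 1 by rewrite r0 /=; apply: le1_of_sum.
set S := \sum_a r a ^+ 2.
have S1 : S <= 1.
  rewrite -rs; apply: ler_sum => a _; have /andP[h1 h2] := r01 a.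
  by rewrite expr2 ler_piMl.
have HHrho : HH r rho = (2 - S) / 4.
  rewrite HH_formula //; congr (_ / _).
  rewrite -/r (eq_bigr (fun a => - (r a ^+ 2))); last by move=> a _; rewrite subrr expr0n /= add0r.
  by rewrite sumrN /S addrC.
have HHsig s : density s ->
    HH r s = HH r rho + (\sum_a (Pof s a - r a) ^+ 2) / 4.
  move=> ds; rewrite HH_formula ?(Pof_sum d0 ds) // HHrho.
  have -> : \sum_a ((Pof s a - r a) ^+ 2 - r a ^+ 2) = \sum_a (Pof s a - r a) ^+ 2 - S.
    by rewrite sumrB.
  by field.
have Hpos : 0 < HH r rho by rewrite HHrho; lra.
pose p := fun _ : 'I_2 => 1 / 2 : R.
pose L := fun m : nat => match m return 'I_2 -> {linear 'M[R[i]]_(d ^ m) -> 'M[R[i]]_2} with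
  | 2 => Lam r
  | m' => fun _ => @TRc R (d ^ m')%N
  end.
exists 2, 2, p, L.
have pd : prob_dist p.
  split => [i|]; first by rewrite /p; lra.
  by rewrite big_ord_recr big_ord1 /p /=; lra.
split.
  move=> [|[|[|m]]] //= hm; split => // i.
    exact (mp_channel (o1 (d:=d)) (cc_ge0 r01 i) (cc_TP d0 r i)).
  exact: TR_channel.
split.
  move=> s Fs [|[|[|m]]] //= hm.
    change (0 < perr_min (fun _ : 'I_2 => 1 / 2) (Lam r) (s *t s)).
    rewrite perr_min2 //; last exact: FD.
    rewrite (HHsig s (FD _ Fs)); apply: mulr_gt0; first lra.
    apply: ltr_wpDr => //; apply: divr_ge0 => //; apply: sumr_ge0 => a _; apply: sqr_ge0.
  rewrite perr_min_TR; first lra.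
  by apply: tr_tpow; case: (FD _ Fs).
have [e [e0 He]] := sep cF nF.
have N0 : 0 < (8 * d)%:R :> R by rewrite ltr0n; lia.
set del := (e / (8 * d)%:R) ^+ 2.
have del0 : 0 < del by rewrite /del exprn_gt0 // divr_gt0.
exists (HH r rho / (HH r rho + del / 4)); split.
  rewrite ltr_pdivrMr; last lra.
  lra.
move=> s Fs; exists 2%N; split; first by rewrite leqnn d2.
change (perr_min (fun _ : 'I_2 => 1 / 2) (Lam r) (rho *t rho) /
        perr_min (fun _ : 'I_2 => 1 / 2) (Lam r) (s *t s) <= HH r rho / (HH r rho + del / 4)).
have ds := FD _ Fs.
rewrite !perr_min2 //.
have [i [j hij]] := He s Fs.
have [t ht] := IC d0 ds.1 drho.1 hij.
set a0 := (i, j, t) in ht.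
have hD : del <= \sum_a (Pof s a - r a) ^+ 2.
  rewrite (bigD1 a0) //=.
  have h0 : 0 <= \sum_(a | a != a0) (Pof s a - r a) ^+ 2 by apply: sumr_ge0 => a _; apply: sqr_ge0.
  suff : del <= (Pof s a0 - r a0) ^+ 2 by lra.
  rewrite -real_normK ?num_real // /del.
  have h1 : e / (8 * d)%:R <= `|Pof s a0 - r a0| by rewrite ler_pdivrMr // mulrC.
  have h2 : 0 <= e / (8 * d)%:R by rewrite divr_ge0 // ltW.
  by rewrite !expr2; apply: ler_pM.
have HS := HHsig s ds.
have Hs : HH r rho + del / 4 <= HH r s by lra.
have c0 : 0 <= HH r rho / (HH r rho + del / 4) by rewrite divr_ge0 // ltW //; lra.
have -> : 1 / 2 * HH r rho / (1 / 2 * HH r s) = HH r rho / HH r s.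
  rewrite HS; field; lra.
rewrite ler_pdivrMr; last lra.
apply: (le_trans _ (ler_wpM2l c0 Hs)).
rewrite divfK //; lra.
Qed.
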